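(* Let $G$ be a graph and $x$ an arbitrary vertex of $G$. Then there exists an L-sequence of $G$ of length $\gamma_{gr}^{L}(G)$ that contains $x$.
   Context: For a graph $G$, $N(v)$ is the open neighborhood and $N[v]=N(v)\cup\{v\}$ the closed neighborhood of $v$. A sequence $(v_1,\ldots,v_k)$ of distinct vertices is an L-sequence if $N[v_i]\setminus\bigcup_{j=1}^{i-1}N(v_j)\neq\emptyset$ for each $i\in[k]$. The L-Grundy domination number $\gamma_{gr}^{L}(G)$ is the maximum length of an L-sequence in $G$. *)

(* Defs.v *)
From mathcomp Require Import all_boot.

Set Implicit Arguments. Unset Strict Implicit. Unset Printing Implicit Defensive.

Definition simple_graph (T : finType) (e : rel T) : Prop :=
  symmetric e /\ irreflexive e.

Definition Nopen (T : finType) (e : rel T) (v : T) : {set T} := [set u | e v u].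
Definition Nclosed (T : finType) (e : rel T) (v : T) : {set T} := v |: Nopen e v.

Definition is_Lseq (T : finType) (e : rel T) (s : seq T) : bool :=
  uniq s &&
  all (fun i => [exists v : T, (v \in Nclosed e (nth v s i)) &&
                   (v \notin \bigcup_(u <- take i s) Nopen e u)])
      (iota 0 (size s)).

(* L-Grundy domination number: maximum length of an L-sequence
   (every L-sequence has length <= #|T| since its vertices are distinct). *)
Definition gammaL (T : finType) (e : rel T) : nat :=
  \max_(k < #|T|.+1 | [exists t : k.-tuple T, is_Lseq e t]) k.

(* Main.v *)
Require Import Defs.
From mathcomp Require Import all_boot.
Set Implicit Arguments. Unset Strict Implicit. Unset Printing Implicit Defensive.

Section L.
Variables (T : finType) (e : rel T).

Fixpoint Lr (U : {set T}) (s : seq T) : bool :=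
  if s is v :: s' then
    [exists w, (w \in Nclosed e v) && (w \notin U)] && Lr (U :|: Nopen e v) s'
  else true.

Definition bigU (s : seq T) := \bigcup_(u <- s) Nopen e u.

Lemma Lr_gen (U : {set T}) s :
  all (fun i => [exists v : T, (v \in Nclosed e (nth v s i)) &&
                   (v \notin U :|: \bigcup_(u <- take i s) Nopen e u)])
      (iota 0 (size s)) = Lr U s.
Proof.
elim: s U => [|v s IH] U //=.
rewrite big_nil setU0 -(IH (U :|: Nopen e v)).
congr (_ && _).
rewrite -add1n iotaDl all_map; apply: eq_all => i /=.
by rewrite big_cons setUA.
Qed.

Lemma is_LseqE s : is_Lseq e s = uniq s && Lr set0 s.
Proof.
rewrite /is_Lseq -Lr_gen; congr (_ && _); apply: eq_all => i.
by apply: eq_existsb => w; rewrite set0U.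
Qed.

Lemma Lr_cat U a b : Lr U (a ++ b) = Lr U a && Lr (U :|: bigU a) b.
Proof.
elim: a U => [|v a IH] U /=; first by rewrite /bigU big_nil setU0.
by rewrite IH /bigU big_cons setUA andbA.
Qed.

Lemma Lr_mono (U U' : {set T}) s : U \subset U' -> Lr U' s -> Lr U s.
Proof.
elim: s U U' => [|v s IH] U U' //= sUU' /andP[/existsP[w /andP[w1 w2]] H].
apply/andP; split.
  apply/existsP; exists w; rewrite w1 /=; apply: contra w2; exact: (subsetP sUU').
by apply: IH H; apply: setSU.
Qed.

Lemma bigU_cat a b : bigU (a ++ b) = bigU a :|: bigU b.
Proof. by rewrite /bigU big_cat. Qed.

Lemma split_at (X : {set T}) s : forall p,
  ~~ (X \subset bigU p) -> X \subset bigU (p ++ s) ->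
  exists a v b, [/\ s = a ++ v :: b, ~~ (X \subset bigU (p ++ a)) &
                     X \subset bigU (p ++ a ++ [:: v])].
Proof.
elim: s => [|v s IH] p H1 H2; first by rewrite cats0 (negbTE H1) in H2.
case H: (X \subset bigU (p ++ [:: v])).
  by exists [::], v, s; rewrite cats0 H1 H.
have H2' : X \subset bigU ((p ++ [:: v]) ++ s) by rewrite -catA.
have [a [w [b [-> Ha Hb]]]] := IH (p ++ [:: v]) (negbT H) H2'.
by exists (v :: a), w, b; rewrite -!catA /= in Ha Hb.
Qed.

Lemma Lseq_le s : is_Lseq e s -> size s <= gammaL e.
Proof.
move=> Hs; have Hu : uniq s by move: Hs; rewrite is_LseqE => /andP[].
have Hsz : size s < #|T|.+1 by rewrite ltnS -(card_uniqP Hu) max_card.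
rewrite /gammaL.
apply: (@leq_bigmax_cond _ _ (fun k : 'I_#|T|.+1 => val k) (Ordinal Hsz)).
by apply/existsP; exists (in_tuple s).
Qed.

Lemma Lseq_ex : exists s, is_Lseq e s /\ size s = gammaL e.
Proof.
have P0 : [exists t : (@ord0 #|T|).-tuple T, is_Lseq e t].
  by apply/existsP; exists [tuple].
rewrite /gammaL (bigmax_eq_arg ord0 P0).
case: (@arg_maxnP _ ord0 (fun k : 'I_#|T|.+1 => [exists t : k.-tuple T, is_Lseq e t]) (fun k : 'I_#|T|.+1 => val k) P0) => k /existsP[t Ht] _.
by exists t; rewrite size_tuple.
Qed.

End L.

Theorem proposition6p1 (T : finType) (e : rel T) (x : T) :
  simple_graph e ->
  exists s : seq T, [/\ is_Lseq e s, size s = gammaL e & x \in s].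
Proof.
move=> _.
have [s [Hs Hsz]] := Lseq_ex e.
case xs: (x \in s); first by exists s.
have /andP[Hu HL] : uniq s && Lr e set0 s by rewrite -is_LseqE.
case Hc: (Nclosed e x \subset bigU e s); last first.
  have : is_Lseq e (rcons s x).
    rewrite is_LseqE rcons_uniq xs Hu -cats1 Lr_cat HL /= andbT set0U.
    by move/negbT/subsetPn: Hc => [w w1 w2]; apply/existsP; exists w; rewrite w1.
  by move/Lseq_le; rewrite size_rcons Hsz ltnn.
have H0 : ~~ (Nclosed e x \subset bigU e [::]).
  apply/subsetPn; exists x; first by rewrite /Nclosed setU11.
  by rewrite /bigU big_nil in_set0.
have [a [v [b [Es Ha Hb]]]] := split_at H0 Hc.
exists (a ++ x :: b); split.
- move: Hu HL; rewrite is_LseqE Es !cat_uniq /= !Lr_cat /= => /and4P[-> /norP[_ hb] _ ->] /and3P[-> _ HLb].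
  move: xs; rewrite Es mem_cat in_cons negb_or => /norP[xa] /norP[_ xb].
  rewrite xa xb (negbTE hb) /= set0U.
  apply/andP; split.
    by move/subsetPn: Ha => [w w1 w2]; apply/existsP; exists w; rewrite w1.
  apply: Lr_mono HLb; rewrite !set0U; apply/subsetP => w.
  rewrite !in_setU => /orP[->//|wx].
  have : w \in bigU e (a ++ [:: v]).
    apply: (subsetP Hb); by rewrite /Nclosed in_setU1 wx orbT.
  by rewrite bigU_cat /bigU big_cons big_nil setU0 in_setU.
- by rewrite -Hsz Es !size_cat.
- by rewrite mem_cat in_cons eqxx orbT.
Qed.
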